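(* Let $n>k\ge 1$ be integers, not both even, let $\alpha=\lceil n/2\rceil-\lfloor (n-k)/2\rfloor$ and $\beta=k-\alpha$, and let $G=\sqrt{n/k}\,W_n^H\Sigma W_k$. Let $1\le p\le n$ and let $G_{p\times k}$ be any $p\times k$ submatrix of $G$ formed by $p$ of its rows. Then the smallest eigenvalue of $G_{p\times k}G_{p\times k}^H$ is at most $1$ and the largest eigenvalue of $G_{p\times k}G_{p\times k}^H$ is at least $1$.
   Context: For a positive integer $l$, $W_l$ denotes the unitary $l\times l$ DFT matrix, $(W_l)_{r,s}=\frac{1}{\sqrt l}e^{-j2\pi(r-1)(s-1)/l}$, and $^H$ denotes conjugate transpose. $\Sigma$ is the $n\times k$ matrix $\begin{pmatrix} I_\alpha & 0\\ 0 & 0\\ 0 & I_\beta\end{pmatrix}$: its first $\alpha$ rows are $(I_\alpha\ 0)$, its last $\beta$ rows are $(0\ I_\beta)$, and its middle $n-k$ rows are zero. *)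

(* Defs.v *)
From HB Require Import structures.
From mathcomp Require Import all_boot all_order all_algebra.
From mathcomp Require Import reals trigo.
From mathcomp Require Import complex.
Set Implicit Arguments. Unset Strict Implicit. Unset Printing Implicit Defensive.
Import Order.TTheory GRing.Theory Num.Theory.
Local Open Scope ring_scope.


Definition mxH (R : realType) (m n : nat) (A : 'M[R[i]]_(m, n)) : 'M[R[i]]_(n, m) :=
  \matrix_(i < n, j < m) (A j i)^*%C.

(* unitary l x l DFT matrix, 0-indexed:
   (W_l)_{r,s} = l^{-1/2} exp(-j 2 pi r s / l) *)
Definition DFT_entry (R : realType) (l r s : nat) : R[i] :=
  ((Num.sqrt (l%:R : R))^-1)%:C%C *
  (let theta : R := 2 * pi * (r%:R) * (s%:R) / (l%:R) in
   ((cos theta) +i* (- sin theta))%C).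

Definition DFT (R : realType) (l : nat) : 'M[R[i]]_l :=
  \matrix_(r < l, s < l) DFT_entry R l r s.

Definition alpha (n k : nat) : nat := (n.+1)./2 - (n - k)./2.  (* ceil(n/2) - floor((n-k)/2) *)
Definition beta (n k : nat) : nat := k - alpha n k.

(* Sigma: first alpha rows (I_alpha 0), middle n-k rows zero, last beta rows (0 I_beta) *)
Definition Sigma (R : realType) (n k : nat) : 'M[R[i]]_(n, k) :=
  \matrix_(i < n, j < k)
    (if (((i < alpha n k)%N) && (j == i :> nat))
        || (((alpha n k + (n - k) <= i)%N) && ((j + (n - k))%N == i :> nat))
     then 1 else 0).

Definition Gmx (R : realType) (n k : nat) : 'M[R[i]]_(n, k) :=
  ((Num.sqrt ((n%:R : R) / (k%:R)))%:C%C) *: (mxH (DFT R n) *m Sigma R n k *m DFT R k).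

(* Main.v *)
Require Import Defs.
From HB Require Import structures.
From mathcomp Require Import all_boot all_order all_algebra.
From mathcomp Require Import reals trigo.
From mathcomp Require Import complex.
Import Order.TTheory GRing.Theory Num.Theory.
Local Open Scope ring_scope.
From mathcomp Require Import ring lra zify.
Import Order.TTheory GRing.Theory Num.Theory.
Local Open Scope ring_scope.
Section Abstract.
Variable R : realType.
Local Notation C := (R[i]).

Lemma mxH_mul m n q (A : 'M[C]_(m,n)) (B : 'M[C]_(n,q)) :
  mxH (A *m B) = mxH B *m mxH A.
Proof.
apply/matrixP=> i j; rewrite !mxE rmorph_sum; apply: eq_bigr=> l _.
by rewrite !mxE rmorphM mulrC.
Qed.

Lemma mxH_scale m n (c : C) (A : 'M[C]_(m,n)) : mxH (c *: A) = (c^*)%C *: mxH A.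
Proof. by apply/matrixP=> i j; rewrite !mxE rmorphM. Qed.

Lemma normsq_ge0 n (v : 'rV[C]_n) : 0 <= (v *m mxH v) 0 0.
Proof.
rewrite !mxE; apply: sumr_ge0 => j _; rewrite mxE; exact: mulcJ_ge0.
Qed.

Lemma normsq_gt0 n (v : 'rV[C]_n) : v != 0 -> 0 < (v *m mxH v) 0 0.
Proof.
move=> nz; rewrite lt0r normsq_ge0 andbT; apply: contra nz => /eqP H.
apply/eqP/matrixP => i j; rewrite ord1 [RHS]mxE.
move: H; rewrite mxE => /psumr_eq0P H.
have H0 : forall j0 : 'I_n, true -> 0 <= v 0 j0 * mxH v j0 0.
  by move=> j0 _; rewrite mxE; exact: mulcJ_ge0.
have := H H0 j isT; rewrite mxE => /eqP; rewrite mul_conjC_eq0 => /eqP //.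
Qed.

Lemma eig_ge0 p k (A : 'M[C]_(p,k)) mu :
  eigenvalue (A *m mxH A) mu -> 0 <= mu.
Proof.
case/eigenvalueP => v Hv nz.
have E : (v *m A) *m mxH (v *m A) = mu *: (v *m mxH v).
  by rewrite mxH_mul mulmxA -(mulmxA v) Hv scalemxAl.
have E' : ((v *m A) *m mxH (v *m A)) 0 0 = mu * (v *m mxH v) 0 0.
  by rewrite E mxE.
have hb := @normsq_gt0 _ _ nz.
have -> : mu = ((v *m A) *m mxH (v *m A)) 0 0 / (v *m mxH v) 0 0.
  by rewrite E' mulfK // gt_eqF.
by rewrite divr_ge0 // ?normsq_ge0 // ltW.
Qed.

Lemma sum_gt1 (s : seq C) : (forall z, z \in s -> 1 < z) -> (0 < size s)%N ->
  (size s)%:R < \sum_(z <- s) z.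
Proof.
elim: s => [//|x s IH] H _; rewrite big_cons /= -addn1 natrD addrC.
have h1 : 1 < x by apply: H; rewrite mem_head.
case: s IH H => [|y s] IH H; first by rewrite big_nil !addr0. 
apply: ltrD => //; apply: IH => // z zs; apply: H; by rewrite in_cons zs orbT.
Qed.

Lemma sum_lt1 (s : seq C) : (forall z, z \in s -> z < 1) -> (0 < size s)%N ->
  \sum_(z <- s) z < (size s)%:R.
Proof.
elim: s => [//|x s IH] H _; rewrite big_cons /= -addn1 natrD addrC.
have h1 : x < 1 by apply: H; rewrite mem_head.
case: s IH H => [|y s] IH H; first by rewrite big_nil /= mulr0n !add0r. 
apply: ltrD => //; apply: IH => // z zs; apply: H; by rewrite in_cons zs orbT.
Qed.

Lemma trace_arg p k (A : 'M[C]_(p,k)) : (0 < p)%N ->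
  \tr (A *m mxH A) = p%:R ->
  (exists lam : R, eigenvalue (A *m mxH A) lam%:C%C /\ lam <= 1) /\
  (exists lam : R, eigenvalue (A *m mxH A) lam%:C%C /\ 1 <= lam).
Proof.
set M := A *m mxH A => p0 Htr.
have [rs Hrs] := closed_field_poly_normal (char_poly M).
rewrite (monicP (char_poly_monic M)) scale1r in Hrs.
have Hsz : size rs = p.
  by have := size_char_poly M; rewrite Hrs size_prod_XsubC => -[].
have Hroot z : z \in rs -> eigenvalue M z.
  by rewrite eigenvalue_root_char Hrs root_prod_XsubC.
have Hreal z : z \in rs -> z \is Num.real.
  by move=> /Hroot /eig_ge0; exact: ger0_real.
have Hsum : \sum_(z <- rs) z = p%:R.
  have := char_poly_trace M p0; rewrite Hrs -{1}Hsz coefPn_prod_XsubC ?Hsz -?lt0n //.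
  by move/eqP; rewrite eqr_opp Htr => /eqP.
have one_real : (1 : C) \is Num.real by [].
split.
- have : has (fun z : C => z <= 1) rs.
    apply/negPn/negP => /hasPn H.
    have HH : forall z, z \in rs -> 1 < z.
      by move=> z zs; rewrite real_ltNge ?one_real ?Hreal //; have h := H z zs; exact h.
    by have := @sum_gt1 rs HH; rewrite Hsz Hsum ltxx => /(_ p0).
  case/hasP => z zs zle; exists (complex.Re z); rewrite RRe_real ?Hreal //; split; first exact: Hroot.
  by rewrite -lecR RRe_real ?Hreal // rmorph1.
- have : has (fun z : C => 1 <= z) rs.
    apply/negPn/negP => /hasPn H.
    have HH : forall z, z \in rs -> z < 1.
      by move=> z zs; rewrite real_ltNge ?one_real ?Hreal //; have h := H z zs; exact h.
    by have := @sum_lt1 rs HH; rewrite Hsz Hsum ltxx => /(_ p0).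
  case/hasP => z zs zle; exists (complex.Re z); rewrite RRe_real ?Hreal //; split; first exact: Hroot.
  by rewrite -lecR RRe_real ?Hreal // rmorph1.
Qed.
End Abstract.
Section Trig.
Variable R : realType.
Local Notation C := (R[i]).
Definition E (x : R) : C := (cos x +i* (- sin x))%C.

Lemma E_add x y : E (x + y) = E x * E y.
Proof.
rewrite /E cosD sinD; simpc. apply/eqP; rewrite eq_complex /=; apply/andP; split; apply/eqP; ring.
Qed.

Lemma E_conj x : (E x)^*%C = E (- x).
Proof. by rewrite /E /conjc cosN sinN. Qed.

Lemma E0 : E 0 = 1.
Proof. by rewrite /E cos0 sin0 oppr0. Qed.

Lemma E_natmul x m : E (x *+ m) = E x ^+ m.
Proof.
elim: m => [|m IH]; first by rewrite mulr0n expr0 E0.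
by rewrite mulrS E_add IH exprS.
Qed.

Lemma E_2pi_nat m : E ((pi *+ 2) *+ m) = 1.
Proof. by rewrite E_natmul /E cos2pi sin2pi oppr0 expr1n. Qed.

Lemma E_neq1 x : 0 < `|x| < pi *+ 2 -> E x != 1.
Proof.
move=> /andP[h1 h2]; apply/negP => /eqP H.
have hc : cos x = 1 by move: H; rewrite /E => -[].
have hs : 0 < sin (`|x| / 2).
  apply: sin_gt0_pi; apply/andP; split; first by rewrite divr_gt0.
  by rewrite ltr_pdivrMr // mulr_natr.
have : cos (`|x| / 2 *+ 2) = 1.
  rewrite -mulr_natr mulfVK ?pnatr_eq0 //; case: (lerP 0 x) => hx; first by rewrite ger0_norm.
  by rewrite ltr0_norm // cosN.
rewrite cos_mulr2n cos2sin2 => H2.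
have : sin (`|x| / 2) ^+ 2 = 0 by lra.
by move/eqP; rewrite sqrf_eq0 gt_eqF.
Qed.

Lemma conjc_scal (c : R) (z : C) : ((c%:C * z)^*)%C = c%:C%C * (z^*)%C.
Proof. by case: z => a b; simpc. Qed.

Lemma DFT_entryE l r s : DFT_entry R l r s =
  ((Num.sqrt (l%:R : R))^-1)%:C%C * E (2 * pi * r%:R * s%:R / l%:R).
Proof. by []. Qed.

Lemma cc_sq l : (0 < l)%N ->
  ((Num.sqrt (l%:R : R))^-1)%:C%C * ((Num.sqrt (l%:R : R))^-1)%:C%C = ((l%:R : R)^-1)%:C%C.
Proof.
move=> l0; rewrite -rmorphM -invfM -expr2 sqr_sqrtr //.
Qed.

Lemma DFT_prod l r r' s : (0 < l)%N ->
  DFT_entry R l r s * (DFT_entry R l r' s)^*%C =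
  ((l%:R : R)^-1)%:C%C * E (2 * pi * (r%:R - r'%:R) / l%:R) ^+ s.
Proof.
move=> l0; rewrite !DFT_entryE conjc_scal E_conj mulrACA cc_sq //.
rewrite -E_add -E_natmul; congr (_ * E _).
have ln : (l%:R : R) != 0 by rewrite pnatr_eq0 -lt0n.
rewrite -mulr_natr; field.
done.
Qed.

Lemma DFT_unitary l : (0 < l)%N -> DFT R l *m mxH (DFT R l) = 1%:M.
Proof.
move=> l0; have ln : (l%:R : R) != 0 by rewrite pnatr_eq0 -lt0n.
apply/matrixP=> r r'; rewrite !mxE.
under eq_bigr => s _ do rewrite !mxE DFT_prod //.
rewrite -mulr_sumr.
case: (eqVneq r r') => [->|neq].
  have -> : 2 * pi * ((r' : nat)%:R - (r' : nat)%:R) / (l%:R : R) = 0.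
    by rewrite subrr mulr0 mul0r.
  rewrite E0; under eq_bigr do rewrite expr1n.
  rewrite sumr_const card_ord -(rmorph_nat (real_complex R)) -rmorphM mulVf //.
set y := 2 * pi * _ / _.
have zl : E y ^+ l = 1.
  rewrite -E_natmul.
  have -> : y *+ l = (pi *+ 2) *+ r + - ((pi *+ 2) *+ r').
    rewrite /y -(mulr_natr _ l) -(mulr_natr (pi *+ 2) r) -(mulr_natr (pi *+ 2) r') -(mulr_natr pi 2).
    by field.
  by rewrite E_add -E_conj !E_2pi_nat conjc1 mulr1.
have z1 : E y != 1.
  apply: E_neq1.
  have hd : 0 < `|((r : nat)%:R : R) - (r' : nat)%:R| < l%:R.
    case: (ltngtP r r') => h.
    - rewrite distrC -(natrB _ (ltnW h)) normr_nat.
      rewrite ltr0n ltr_nat subn_gt0 h /=.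
      exact: leq_ltn_trans (leq_subr _ _) (ltn_ord r').
    - rewrite -(natrB _ (ltnW h)) normr_nat.
      rewrite ltr0n ltr_nat subn_gt0 h /=.
      exact: leq_ltn_trans (leq_subr _ _) (ltn_ord r).
    - by move: neq; rewrite (val_inj h) eqxx.
  move: hd => /andP[hd1 hd2].
  rewrite /y !normrM normfV !normr_nat (ger0_norm (pi_ge0 R)).
  have p0 : 0 < 2 * pi :> R by apply: mulr_gt0 => //; exact: pi_gt0.
  apply/andP; split.
    apply: divr_gt0; last by rewrite ltr0n.
    exact: mulr_gt0.
  rewrite ltr_pdivrMr ?ltr0n // -[pi *+ 2]mulr_natl.
  by rewrite ltr_pM2l.
have : (E y - 1) * (\sum_(i < l) E y ^+ i) = 0 by rewrite -subrX1 zl subrr.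
move/eqP; rewrite mulf_eq0 subr_eq0 (negbTE z1) /= => /eqP ->.
by rewrite mulr0.
Qed.
End Trig.
Section Sig.
Variables (R : realType) (n k : nat).
Hypothesis hkn : (k < n)%N.

Definition sig (j : 'I_k) : nat := if (j < alpha n k)%N then (j : nat) else (j + (n - k))%N.
Lemma sig_lt j : (sig j < n)%N.
Proof. rewrite /sig; have := ltn_ord j; case: ifP => _; lia. Qed.
Definition sigo j : 'I_n := Ordinal (sig_lt j).

Lemma Sigma_entry (i : 'I_n) (j : 'I_k) : Sigma R n k i j = (i == sigo j)%:R.
Proof.
rewrite mxE; set b := (_ || _); suff -> : b = (i == sigo j) by case: (i == sigo j).
rewrite /b -val_eqE /= /sig.
have := ltn_ord j; have := ltn_ord i.
case: ifP => hj ? ?.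
- case: (eqVneq (i : nat) j) => [e|ne]; first by rewrite e hj.
  rewrite andbF /=; apply/negbTE/negP => /andP[h1 /eqP h2]; lia.
- case: (eqVneq (i : nat) (j + (n - k))%N) => [e|ne].
  + rewrite e andbT; apply/orP; right; move/negbT: hj; lia.
  + rewrite andbF orbF; apply/negbTE/negP => /andP[h1 /eqP h2]; lia.
Qed.
End Sig.

Section Final.
Variable R : realType.
Local Notation C := (R[i]).

Lemma mxH_entry m q (A : 'M[C]_(m,q)) i j : mxH A i j = ((A j i)^*)%C.
Proof. by rewrite mxE. Qed.

Lemma DFT_norm l a b : (0 < l)%N ->
  DFT_entry R l a b * (DFT_entry R l a b)^*%C = ((l%:R : R)^-1)%:C%C.
Proof. by move=> l0; rewrite DFT_prod // subrr mulr0 mul0r E0 expr1n mulr1. Qed.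

Lemma B_entry n k (hkn : (k < n)%N) (r : 'I_n) (j : 'I_k) :
  (mxH (DFT R n) *m Sigma R n k) r j = ((DFT_entry R n (@sigo n k hkn j) r)^*)%C.
Proof.
rewrite mxE (bigD1 (@sigo n k hkn j)) //= (@Sigma_entry R n k hkn) eqxx mulr1 big1 ?addr0.
  by rewrite !mxE.
by move=> a /negbTE ha; rewrite (@Sigma_entry R n k hkn) ha mulr0.
Qed.

Lemma G_diag n k (hk : (0 < k)%N) (hkn : (k < n)%N) (r : 'I_n) :
  (Gmx R n k *m mxH (Gmx R n k)) r r = 1.
Proof.
have n0 : (0 < n)%N by apply: leq_ltn_trans hkn.
rewrite /Gmx mxH_scale -scalemxAl -scalemxAr scalerA.
set B := mxH (DFT R n) *m Sigma R n k.
rewrite mxH_mul mulmxA -(mulmxA B) DFT_unitary // mulmx1.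
rewrite mxE mxE.
rewrite /B; under eq_bigr => j _ do rewrite mxH_entry !(@B_entry n k hkn) conjcK mulrC DFT_norm //.
rewrite sumr_const card_ord conjc_real -rmorphM -rmorphMn -rmorphM.
rewrite -expr2 sqr_sqrtr ?divr_ge0 ?ler0n //.
have nn : (n%:R : R) != 0 by rewrite pnatr_eq0 -lt0n.
have kn : (k%:R : R) != 0 by rewrite pnatr_eq0 -lt0n.
have -> : (n%:R / k%:R * (n%:R^-1 *+ k) : R) = 1.
  by field; rewrite nn kn.
by [].
Qed.
End Final.

Theorem theorem1 (R : realType) (n k p : nat) (f : 'I_p -> 'I_n) :
  (1 <= k)%N -> (k < n)%N -> ~~ (~~ odd n && ~~ odd k) ->
  (1 <= p)%N -> (p <= n)%N -> injective f ->
  let Gp := rowsub f (Gmx R n k) in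
  let M := Gp *m mxH Gp in
  (exists lam : R, eigenvalue M lam%:C%C /\ lam <= 1) /\
  (exists lam : R, eigenvalue M lam%:C%C /\ 1 <= lam).
Proof.
move=> hk hkn _ hp _ _ Gp M.
apply: trace_arg => //.
rewrite /mxtrace.
have -> : \sum_i (Gp *m mxH Gp) i i = \sum_(i < p) (1 : R[i]).
  apply: eq_bigr => i _.
  rewrite -(@G_diag R n k hk hkn (f i)) !mxE; apply: eq_bigr => j _; rewrite !mxE.
  done.
by rewrite sumr_const card_ord.
Qed.
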